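(* Let $k\ge 7$. Then there is a finite group $H$ with an elementary abelian $2$-subgroup $1\ne M\trianglelefteq H$ such that $H/M\cong A_k$, the extension $1\to M\to H\to A_k\to 1$ is nonsplit, and $H$ has a faithful transitive permutation representation of degree at most $2k(k-1)$.
   Context: An extension is nonsplit if $M$ has no complement in $H$. *)

(* Defs.v *)
From mathcomp Require Export all_boot all_fingroup all_solvable.
Set Implicit Arguments. Unset Strict Implicit. Unset Printing Implicit Defensive.

(* Main.v *)
Require Import Defs.
From mathcomp Require Import zify.
Local Open Scope group_scope.
Set Implicit Arguments. Unset Strict Implicit. Unset Printing Implicit Defensive.

Definition Om (k : nat) := {p : 'I_k * 'I_k | p.1 != p.2}.
Definition Tk (k : nat) := (Om k * bool)%type.

Lemma actOm_subproof k (s : {perm 'I_k}) (w : Om k) :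
  (s (val w).1, s (val w).2).1 != (s (val w).1, s (val w).2).2.
Proof. by rewrite /= (inj_eq perm_inj); case: w. Qed.
Definition actOm k (s : {perm 'I_k}) (w : Om k) : Om k :=
  exist _ (s (val w).1, s (val w).2) (actOm_subproof s w).
Lemma revOm_subproof k (w : Om k) : ((val w).2, (val w).1).1 != ((val w).2, (val w).1).2.
Proof. by rewrite /= eq_sym; case: w. Qed.
Definition revOm k (w : Om k) : Om k := exist _ ((val w).2, (val w).1) (revOm_subproof w).
Definition invp k (s : {perm 'I_k}) (w : Om k) : bool :=
  ((val w).1 < (val w).2)%N (+) (s (val w).1 < s (val w).2)%N.

Definition gTk k := ({perm Tk k} * {perm 'I_k})%type.
Definition sgn k (x : gTk k) (w : Om k) : bool := (x.1 (w, false)).2.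
Definition condH k (x : gTk k) : bool :=
  [&& x.2 \in 'Alt_('I_k),
      [forall w : Tk k, x.1 w == (actOm x.2 w.1, w.2 (+) sgn x w.1)] &
      [forall w : Om k, sgn x w (+) sgn x (revOm w) == invp x.2 w]].
Definition Hset k := [set x : gTk k | condH x].

Lemma actOmM k (s t : {perm 'I_k}) w : actOm (s * t) w = actOm t (actOm s w).
Proof. by apply: val_inj; rewrite /= !permM. Qed.
Lemma actOm1 k (w : Om k) : actOm 1 w = w.
Proof. by apply: val_inj; rewrite /= !perm1; case: (val w). Qed.
Lemma revOm_act k s (w : Om k) : revOm (actOm s w) = actOm s (revOm w).
Proof. by apply: val_inj. Qed.
Lemma revOmK k (w : Om k) : revOm (revOm w) = w.
Proof. by apply: val_inj; rewrite /=; case: (val w). Qed.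

Lemma HsetP k (x : gTk k) : reflect
  [/\ x.2 \in 'Alt_('I_k), forall w, x.1 w = (actOm x.2 w.1, w.2 (+) sgn x w.1) &
      forall w, sgn x w (+) sgn x (revOm w) = invp x.2 w] (x \in Hset k).
Proof.
rewrite [x \in Hset k]inE /condH; apply: (iffP idP) => [|[a b c]].
  by case/and3P=> a /forallP b /forallP c; split=> // w; apply/eqP.
by apply/and3P; split=> //; apply/forallP => w; apply/eqP.
Qed.

Lemma Hgroup k : group_set (Hset k).
Proof.
apply/group_setP; split.
  apply/HsetP; split; first exact: group1.
    by move=> [w b]; rewrite /sgn !perm1 actOm1 /=; case: b.
  by move=> w; rewrite /sgn /invp /= !perm1 addbb addbb.
move=> x y /HsetP[xa xe xs] /HsetP[ya ye ys]; apply/HsetP.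
have sgM w : sgn (x * y) w = sgn x w (+) sgn y (actOm x.2 w).
  by rewrite /sgn /= permM xe ye /= ye.
split; first by rewrite /= groupM.
  by move=> [w b]; rewrite /= permM xe ye /= sgM actOmM addbA.
move=> w; rewrite !sgM -revOm_act addbACA xs ys /invp /= !permM.
by rewrite addbA addbK.
Qed.
Canonical HG k := Group (Hgroup k).

Definition liftf k (s : {perm 'I_k}) (c : Om k -> bool) (w : Tk k) : Tk k :=
  (actOm s w.1, w.2 (+) c w.1).
Lemma liftf_inj k s c : injective (@liftf k s c).
Proof.
move=> [w1 b1] [w2 b2] e.
have e1 := congr1 fst e; have e2 := congr1 snd e; rewrite /= in e1 e2.
have ew : w1 = w2.
  apply: val_inj; have := congr1 val e1; rewrite /= => -[h1 h2].
  move: h1 h2 => /perm_inj h1 /perm_inj h2.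
  by case: (val w1) (val w2) h1 h2 => ? ? [? ?] /= -> ->.
by move: e2; rewrite ew => /addIb ->.
Qed.
Definition liftp k s c := perm (@liftf_inj k s c).

Lemma lift_in k (s : {perm 'I_k}) c : s \in 'Alt_('I_k) ->
  (forall w, c w (+) c (revOm w) = invp s w) -> (liftp s c, s) \in Hset k.
Proof.
move=> sa cs.
have sg : sgn (liftp s c, s) =1 c by move=> w; rewrite /sgn /= permE.
apply/HsetP; split=> //=.
  by move=> w; rewrite permE sg.
by move=> w; rewrite !sg.
Qed.

Definition cc0 k (s : {perm 'I_k}) (w : Om k) : bool := ((val w).1 < (val w).2)%N && invp s w.

Lemma ltn_flip k (x y : 'I_k) : x != y -> (y < x)%N = ~~ (x < y)%N.
Proof. by move=> ne; rewrite ltnNge leq_eqVlt val_eqE (negbTE ne). Qed.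

Lemma cc0P k s (w : Om k) : cc0 s w (+) cc0 s (revOm w) = invp s w.
Proof.
case: w => [[a b] /= ne]; rewrite /cc0 /invp /=.
have ne' : s a != s b by rewrite (inj_eq perm_inj).
rewrite (ltn_flip ne) (ltn_flip ne').
by case: (a < b)%N; case: (s a < s b)%N.
Qed.

Theorem theorem4p4 (k : nat) (hk : 7 <= k) :
  exists (gT : finGroupType) (H M : {group gT}),
    [/\ [/\ M <| H, M :!=: 1 & 2.-abelem M],
        H / M \isog 'Alt_('I_k),
        ~~ [splits H, over M] &
        (exists (T : finType) (phi : {morphism H >-> {perm T}}),
          [/\ 'injm phi, [transitive phi @* H, on [set: T] | 'P]
            & #|T| <= 2 * k * (k - 1)])].
Proof.
have k0 : 0 < k by apply: leq_trans hk.
have k1 : 1 < k by apply: leq_trans hk.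
have k2 : 2 < k by apply: leq_trans hk.
have k3 : 3 < k by apply: leq_trans hk.
pose o0 := Ordinal k0; pose o1 := Ordinal k1; pose o2 := Ordinal k2; pose o3 := Ordinal k3.
pose w0 : Om k := exist _ (o0, o1) isT.
pose H := HG k.
pose pi := restrm (subsetT H) (@snd_morphism _ _).
have Hact x : x \in H -> forall w, x.1 w = (actOm x.2 w.1, w.2 (+) sgn x w.1).
  by case/HsetP.
have Hsg x : x \in H -> forall w, sgn x w (+) sgn x (revOm w) = invp x.2 w.
  by case/HsetP.
have Halt x : x \in H -> x.2 \in 'Alt_('I_k) by case/HsetP.
have kerE x : (x \in 'ker pi) = (x \in H) && (x.2 == 1).
  by rewrite !inE.
have peq (x y : gTk k) : x.1 = y.1 -> x.2 = y.2 -> x = y.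
  by case: x y => ? ? [? ?] /= -> ->.
exists _, H, ('ker pi)%G.
have Mact x : x \in 'ker pi -> forall w, x.1 w = (w.1, w.2 (+) sgn x w.1).
  rewrite kerE => /andP[xH /eqP x2] w; by rewrite Hact // x2 actOm1.
split.
- split; first exact: ker_normal.
  + pose c w := (w == w0) || (w == revOm w0).
    have cs w : c w (+) c (revOm w) = invp 1 w.
      rewrite /invp !perm1 addbb /c.
      have ri : injective (@revOm k) := can_inj (@revOmK k).
      rewrite (inj_eq ri) -[X in revOm w == X]revOmK (inj_eq ri).
      by rewrite orbC addbb.
    have mH := lift_in (group1 _) cs.
    apply/trivgPn; exists (liftp 1 c, 1); first by rewrite kerE mH /=.
    apply/eqP => /(congr1 (fun x : gTk k => x.1 (w0, false))).
    by rewrite /= perm1 permE /liftf /c /= => -[].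
  + apply/(abelemP (isT : prime 2)); split.
      apply/centsP => x xM y yM; apply: peq.
        apply/permP => -[w b]; rewrite !permM (Mact x) // (Mact y) //=.
        rewrite (Mact x) // (Mact y) //=; congr pair.
        have s1 z : z \in 'ker pi -> forall w b, sgn z (w, b).1 = sgn z w by [].
        by rewrite -!addbA [sgn x w (+) _]addbC.
      rewrite /=; move: xM yM; rewrite !kerE => /andP[_ /eqP ->] /andP[_ /eqP ->].
      by rewrite mulg1.
    move=> x xM; rewrite expgS expg1; apply: peq.
      apply/permP => -[w b]; rewrite !permM (Mact x) //= (Mact x) //= perm1.
      by rewrite -addbA addbb addbF.
    move: xM; rewrite kerE => /andP[_ /eqP] /= ->.
    by rewrite mulg1.
- have -> : 'Alt_('I_k) = pi @* H.
    rewrite morphim_restrm setIid morphimEsub ?subsetT //; apply/setP => s.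
    apply/idP/imsetP => [sA|[x xH ->]]; last exact: Halt.
    exists (liftp s (cc0 s), s) => //.
    by apply: lift_in => //; apply: cc0P.
  exact: first_isog.
- apply/splitsP => -[K /complP[tiMK defH]].
  pose ta := tperm o0 o1; pose tc := tperm o2 o3; pose t := ta * tc.
  have tA : t \in 'Alt_('I_k) by rewrite Alt_even odd_permM !odd_tperm.
  have cm : ta * tc = tc * ta.
    by rewrite conjgC /ta tpermJ /tc !tpermD.
  have tt : t * t = 1.
    by rewrite /t -mulgA (mulgA tc) -cm -mulgA tperm2 mulg1 tperm2.
  have t0 : t o0 = o1 by rewrite permM /ta tpermL /tc tpermD.
  have t1 : t o1 = o0 by rewrite permM /ta tpermR /tc tpermD.
  have xH := lift_in tA (@cc0P k t).
  rewrite -[Hset k]/(gval H) -defH in xH.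
  case/mulsgP: xH => m y mM yK ex.
  have yH : y \in H by rewrite -defH -[y]mul1g mem_mulg.
  have y2 : y.2 = t.
    move: (congr1 snd ex) mM; rewrite kerE /= => -> /andP[_ /eqP ->].
    by rewrite mul1g.
  have yyM : y * y \in 'ker pi by rewrite kerE groupM //= y2 tt eqxx.
  have yy1 : y * y = 1.
    by apply/set1gP; rewrite -tiMK inE yyM groupM.
  have := congr1 (fun z : gTk k => z.1 (w0, false)) yy1.
  rewrite /= permM Hact // Hact //= perm1.
  have aw : actOm y.2 w0 = revOm w0 by apply: val_inj; rewrite /= y2 t0 t1.
  rewrite aw Hsg // y2 /invp /= t0 t1 /=.
  by case.
- exists (Tk k), (restrm (subsetT H) (@fst_morphism _ _)); split.
  + apply/injmP => x y xH yH /= e; apply: peq => //.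
    apply/permP => i.
    have [j hj] : exists j : 'I_k, i != j.
      exists (if i == o0 then o1 else o0).
      by case: (i =P o0) => [->|/eqP] //; rewrite eq_sym.
    pose w : Om k := exist _ (i, j) hj.
    have := congr1 (fun z : {perm Tk k} => val (z (w, false)).1) e.
    by rewrite /= Hact // Hact //= => -[].
  + apply/imsetP; exists (w0, false); first exact: in_setT.
    apply/eqP; rewrite eqEsubset subsetT andbT; apply/subsetP => -[w b] _.
    have le2 : 2 <= #|'I_k|.-2 by rewrite card_ord; lia.
    have tr2 := ntransitive_weak le2 (Alt_trans 'I_k).
    have [s sA es] : exists2 s, s \in 'Alt_('I_k) &
        actOm s w0 = w.
      case: w => -[i j] hij.
      have d1 : [tuple o0; o1] \in 2.-dtuple(setT).
        by rewrite inE memtE subset_all /= !inE.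
      have d2 : [tuple i; j] \in 2.-dtuple(setT).
        by rewrite inE memtE subset_all /= !inE /= andbT hij.
      case: (atransP2 tr2 d1 d2) => s sA [/=]; rewrite /aperm => ei ej.
      by exists s => //; apply: val_inj; rewrite /= ei ej.
    pose bb := b (+) cc0 s w0.
    pose c w' := cc0 s w' (+) (bb && ((w' == w0) || (w' == revOm w0))).
    have cs w' : c w' (+) c (revOm w') = invp s w'.
      have ri : injective (@revOm k) := can_inj (@revOmK k).
      rewrite /c (inj_eq ri) -[X in revOm w' == X]revOmK (inj_eq ri).
      by rewrite addbACA cc0P [X in _ && X]orbC addbb addbF.
    have xH := lift_in sA cs.
    apply/imsetP; exists (liftp s c).
      by rewrite morphim_restrm setIid; apply: (mem_morphim _ (in_setT _) xH).
    change ((w, b) = liftp s c (w0, false)).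
    by rewrite /liftp permE /liftf /= es /c /bb eqxx /= andbT addbC -addbA addbb addbF.
  + rewrite card_prod card_bool card_sig.
    have := cardC [pred p : 'I_k * 'I_k | p.1 != p.2].
    have -> : #|[predC [pred p : 'I_k * 'I_k | p.1 != p.2]]| = k.
      rewrite -[RHS](card_ord k) -(@card_codom _ _ (fun i : 'I_k => (i, i))).
        apply: eq_card => -[a b]; rewrite !inE /= negbK.
        apply/eqP/codomP => [->|[x [-> ->]]] //; by exists b.
      by move=> x y [].
    rewrite card_prod card_ord.
    move=> e; rewrite (_ : #|_| = k * k - k); first nia.
    by rewrite -e addnK.
Qed.
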